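(* Let $0<\alpha<\beta<1$ and $t\geq1$. Let $\mathcal{P}_t'$ be the set of real polynomials $f$ of degree at most $t$ with $f(0)=0$ and $f(1)=1$. Any minimizer $f^\star\in\mathcal{P}_t'$ of \[ \frac{\max_{\lambda\in[0,\alpha]}|f(\lambda)|}{\min_{\lambda\in[\beta,1]}|f(\lambda)|} \] over $\mathcal{P}_t'$ is $t$-equioscillatory on $[0,\alpha]$.
   Context: A polynomial $f$ is called $t$-equioscillatory on an interval $[a,b]$ if there exist points $a\le\gamma_0<\gamma_1<\dots<\gamma_{t-1}\le b$ such that $|f(\gamma_s)|=\max_{\lambda\in[a,b]}|f(\lambda)|$ for all $0\le s\le t-1$ and $f(\gamma_0)=-f(\gamma_1)=f(\gamma_2)=-f(\gamma_3)=\cdots$. The objective is taken to be $+\infty$ when the denominator vanishes. *)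

(* Defs.v *)
From HB Require Import structures.
From mathcomp Require Import all_boot all_order all_algebra.
From mathcomp Require Import all_classical all_reals.
From mathcomp Require Import ereal.
Set Implicit Arguments. Unset Strict Implicit. Unset Printing Implicit Defensive.
Import Order.TTheory GRing.Theory Num.Theory.
Local Open Scope ring_scope.
Local Open Scope classical_set_scope.

Section Defs.
Variable R : realType.

(* max_{lambda in [a,b]} |f(lambda)|  (attained for polynomials, so sup = max) *)
Definition pmax (f : {poly R}) (a b : R) : R :=
  sup [set `|f.[x]| | x in [set x : R | a <= x <= b]].

Definition pmin (f : {poly R}) (a b : R) : R :=
  inf [set `|f.[x]| | x in [set x : R | a <= x <= b]].

Definition Pt' (t : nat) : set {poly R} :=
  [set f : {poly R} | (size f <= t.+1)%N /\ f.[0] = 0 /\ f.[1] = 1].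

Definition ratio_obj (alpha beta : R) (f : {poly R}) : \bar R :=
  if pmin f beta 1 == 0 then +oo%E
  else (pmax f 0 alpha / pmin f beta 1)%:E.

Definition equiosc (t : nat) (f : {poly R}) (a b : R) : Prop :=
  exists gamma : nat -> R,
    (forall s, (s < t)%N -> a <= gamma s <= b) /\
    (forall s, (s.+1 < t)%N -> gamma s < gamma s.+1) /\
    (forall s, (s < t)%N -> `|f.[gamma s]| = pmax f a b) /\
    (forall s, (s.+1 < t)%N -> f.[gamma s.+1] = - f.[gamma s]).
End Defs.

(* Main.v *)
Require Import Defs.
From HB Require Import structures.
From mathcomp Require Import all_boot all_order all_algebra.
From mathcomp Require Import all_classical all_reals.
From mathcomp Require Import ereal.
From mathcomp Require Import topology normedtype derive realfun.
From mathcomp Require Import polyrcf.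
From mathcomp Require Import ring lra zify.
Import Order.TTheory GRing.Theory Num.Theory.
Import numFieldNormedType.Exports.
Set Implicit Arguments. Unset Strict Implicit.
Local Open Scope ring_scope.

Local Open Scope classical_set_scope.
Section A.
Variable R : realType.

Lemma cont_abs_horner (p : {poly R}) : continuous (fun x : R => `|p.[x]|).
Proof.
move=> x; apply: continuous_comp; first exact: continuous_horner.
exact: norm_continuous.
Qed.

Lemma pmax_spec (p : {poly R}) a b : a <= b ->
  exists2 c, a <= c <= b & pmax p a b = `|p.[c]| /\
    forall x, a <= x <= b -> `|p.[x]| <= pmax p a b.
Proof.
move=> ab.
have [c cab cmax] := EVT_max ab (continuous_subspaceT (@cont_abs_horner p)).
have cab' : a <= c <= b by rewrite in_itv /= in cab.
have hp : pmax p a b = `|p.[c]|.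
  apply/eqP; rewrite eq_le; apply/andP; split.
    apply: ge_sup; first by exists `|p.[c]|, c.
    move=> _ [x xab <-]; apply: cmax; by rewrite in_itv.
  apply: ub_le_sup; last by exists c.
  exists `|p.[c]| => _ [x xab <-]; apply: cmax; by rewrite in_itv.
exists c => //; split => // x xab; rewrite hp; apply: cmax; by rewrite in_itv.
Qed.

Lemma pmin_lb (p : {poly R}) a b x : a <= x <= b -> pmin p a b <= `|p.[x]|.
Proof.
move=> xab; apply: ge_inf; last by exists x.
by exists 0 => _ [y _ <-].
Qed.

Lemma pmin_ge (p : {poly R}) a b L : a <= b ->
  (forall x, a <= x <= b -> L <= `|p.[x]|) -> L <= pmin p a b.
Proof.
move=> ab H; apply: lb_le_inf; first by exists `|p.[a]|; exists a => //=; rewrite lexx ab.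
by move=> _ [y yab <-]; apply: H.
Qed.

Lemma pmin_ge0 (p : {poly R}) a b : a <= b -> 0 <= pmin p a b.
Proof. by move=> ab; apply: pmin_ge. Qed.
End A.
Local Close Scope classical_set_scope.
Section B.
Variable R : realType.

Lemma prod_pos (c : seq R) x : all (fun ci => x < ci) c -> 0 < \prod_(ci <- c) (ci - x).
Proof.
elim: c => [|a c IH] /=; first by rewrite big_nil.
case/andP => ha hc; rewrite big_cons mulr_gt0 ?IH // subr_gt0 //.
Qed.

Definition altrel (F : R -> R) (a b : R) := (a < b) && (F b == - F a).

Lemma alt_sep (F : R -> R) (M B : R) (s : seq R) (x : R) :
  0 < M -> sorted <%R (x :: s) -> all (fun e => `|F e| == M) (x :: s) ->
  all (fun e => e < B) (x :: s) ->
  exists c : seq R, exists g : seq R,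
   [/\ all (fun ci => ci < B) c, all (fun ci => x < ci) c,
       forall e, e \in x :: s -> 0 < F x * (\prod_(ci <- c) (ci - e)) * F e,
       size g = size c &
       {subset g <= x :: s} /\ sorted (altrel F) (x :: g)].
Proof.
move=> M0; elim: s x => [|y s IH] x.
  move=> _ /= /andP[/eqP Fx _] _; exists [::], [::]; split => //.
  move=> e; rewrite inE => /eqP ->; rewrite big_nil mulr1 -expr2.
  by rewrite exprn_even_gt0 //= -normr_gt0 Fx.
move=> /= /andP[xy sys] /andP[/eqP Fx /andP[/eqP Fy Fs]] /andP[xB /andP[yB sB]].
have H1 : all (fun e => `|F e| == M) (y :: s) by rewrite /= Fy eqxx.
have H2 : all (fun e => e < B) (y :: s) by rewrite /= yB.
have [c [g [cB cy hc sg [subg altg]]]] := IH y sys H1 H2.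
have ge_y : forall e, e \in y :: s -> y <= e.
  move=> e; rewrite inE => /orP[/eqP -> //|es].
  have := order_path_min (@lt_trans _ _) sys => /allP /(_ e es) /ltW //.
have Fxy : F y = F x \/ F y = - F x.
  have : `|F y| = `|F x| by rewrite Fx Fy.
  by move/eqP; rewrite eqr_norm2 => /orP[/eqP->|/eqP->]; [left|right].
case: Fxy => FyFx.
- exists c, g; split => //.
  + apply/allP => ci /(allP cy) /(lt_trans xy) //.
  + move=> e; rewrite inE => /orP[/eqP ->|ee].
      rewrite mulrAC -expr2 mulr_gt0 ?prod_pos //.
        by rewrite exprn_even_gt0 //= -normr_gt0 Fx.
      by apply/allP => ci /(allP cy) /(lt_trans xy).
    by rewrite -FyFx hc.
  + split; first by move=> z /subg ?; rewrite inE; apply/orP; right.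
    move: altg; case: g {sg subg} => [|z g] //= /andP[/andP[yz Fz] ->].
    rewrite andbT /altrel (lt_trans xy yz) /= (eqP Fz) FyFx //.
- exists (((x + y) / 2) :: c), (y :: g); split => /=.
  + rewrite cB andbT; apply: (@lt_trans _ _ y) => //; rewrite ltr_pdivrMr // mulrDr mulr1 ltrD2r //.
  + rewrite ltr_pdivlMr // mulrDr mulr1 ltrD2l xy /=.
    by apply/allP => ci /(allP cy) /(lt_trans xy).
  + move=> e; rewrite inE => /orP[/eqP ->|ee].
      rewrite big_cons; set P := \prod_(ci <- c) _.
      rewrite [X in 0 < X](_ : _ = F x ^+ 2 * (((x + y) / 2 - x) * P)); last by ring.
      apply: mulr_gt0.
      * by rewrite exprn_even_gt0 //= -normr_gt0 Fx.
      * rewrite mulr_gt0 // ?subr_gt0 ?ltr_pdivlMr // ?mulrDr ?mulr1 ?ltrD2l //.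
        by apply: prod_pos; apply/allP => ci /(allP cy) /(lt_trans xy).
    have := hc e ee; rewrite big_cons FyFx.
    have : (x + y) / 2 < e.
      apply: (@lt_le_trans _ _ y); last exact: ge_y.
      by rewrite ltr_pdivrMr // mulrDr mulr1 ltrD2r.
    move=> he h; have -> : F x * (((x + y) / 2 - e) * \prod_(ci <- c) (ci - e)) * F e
        = (e - (x + y) / 2) * (- F x * \prod_(ci <- c) (ci - e) * F e) by ring.
    by rewrite mulr_gt0 // subr_gt0.
  + by rewrite sg.
  + split; last by apply/andP; split => //; rewrite /altrel xy FyFx eqxx.
    move=> z; rewrite inE => /orP[/eqP ->|/subg]; rewrite !inE ?eqxx ?orbT //.
    by move=> ->; rewrite orbT.
Qed.
End B.
Section C.
Variable R : realType.

Lemma prod_neg (c : seq R) y :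
  \prod_(ci <- c) (ci - y) = (-1) ^+ size c * \prod_(ci <- c) (y - ci).
Proof.
elim: c => [|a c IH] /=; first by rewrite !big_nil mulr1.
by rewrite !big_cons IH exprS; ring.
Qed.

Lemma prod_pos' (c : seq R) y : all (fun ci => ci < y) c -> 0 < \prod_(ci <- c) (y - ci).
Proof.
elim: c => [|a c IH] /=; first by rewrite big_nil.
by case/andP => ha hc; rewrite big_cons mulr_gt0 ?IH // subr_gt0.
Qed.

Lemma arith_size (a b e c' dd t : nat) : (a <= (b + dd).-1 -> b <= (2 + e).-1 ->
  e <= c'.+1 -> dd <= 2 -> c'.+1 < t -> a <= t.+1)%N.
Proof. move=> *; lia. Qed.

Lemma size_prod_lin (c : seq R) :
  (size (\prod_(ci <- c) (ci%:P - 'X))%R <= (size c).+1)%N.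
Proof.
elim: c => [|a c IH] /=; first by rewrite big_nil size_poly1.
rewrite big_cons; apply: (leq_trans (size_polyMleq _ _)).
have -> : a%:P - 'X = - ('X - a%:P) :> {poly R} by rewrite opprB.
by rewrite size_polyN size_XsubC /=; apply: leq_trans IH _.
Qed.

Lemma horner_prod_lin (c : seq R) y :
  (\prod_(ci <- c) (ci%:P - 'X)).[y] = \prod_(ci <- c) (ci - y).
Proof.
rewrite horner_prod; apply: eq_bigr => ci _.
by rewrite hornerD hornerN hornerC hornerX.
Qed.

Lemma same_sign_lt (a b M : R) : 0 < a * b -> `|a| <= M -> `|b| < M -> `|a - b| < M.
Proof.
move=> ab aM bM.
have [a0|a0] := ltP 0 a.
  have b0 : 0 < b by rewrite -(pmulr_rgt0 _ a0).
  move: aM bM; rewrite (gtr0_norm a0) (gtr0_norm b0) => aM bM.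
  rewrite ltr_norml; apply/andP; split; lra.
have a0' : a < 0.
  rewrite lt_neqAle a0 andbT; apply/eqP => a00; move: ab; rewrite a00 mul0r ltxx //.
have b0 : b < 0 by move: ab; rewrite -(nmulr_rgt0 _ a0').
move: aM bM; rewrite (ltr0_norm a0') (ltr0_norm b0) => aM bM.
rewrite ltr_norml; apply/andP; split; lra.
Qed.

Lemma poly_nz_itv (p : {poly R}) a b : p != 0 -> a < b ->
  exists x, a < x < b /\ p.[x] != 0.
Proof.
move=> p0 ab.
have sr := sorted_roots a b p.
have rin := @root_in_roots _ p a b p0.
case E: (roots p a b) sr rin => [|z s] sr rin.
  exists ((a + b) / 2); split; first by apply/andP; split; lra.
  apply/negP => /eqP r.
  have : (a + b) / 2 \in `]a, b[ by rewrite in_itv /=; apply/andP; split; lra.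
  by move=> /rin; rewrite /root r eqxx => /(_ isT).
have : z \in `]a, b[ by apply: (@roots_in _ p); rewrite E mem_head.
rewrite in_itv /= => /andP[az zb].
exists ((a + z) / 2); split; first by apply/andP; split; lra.
apply/negP => /eqP r.
have : (a + z) / 2 \in `]a, b[ by rewrite in_itv /=; apply/andP; split; lra.
move=> /rin; rewrite /root r eqxx => /(_ isT).
rewrite inE => /orP[/eqP e|xs]; first lra.
have := order_path_min (@lt_trans _ _) sr => /allP /(_ _ xs); lra.
Qed.
End C.

Unset Implicit Arguments.
Theorem lemma3 (R : realType) (alpha beta : R) (t : nat)
  (halpha : 0 < alpha) (hab : alpha < beta) (hbeta : beta < 1) (ht : (1 <= t)%N)
  (fstar : {poly R}) (hf : Pt' t fstar)
  (hmin : forall g : {poly R}, Pt' t g ->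
            (ratio_obj alpha beta fstar <= ratio_obj alpha beta g)%E) :
  equiosc t fstar 0 alpha.
Proof.
case: hf => sf [f0 f1].
set f := fstar in sf f0 f1 hmin *.
have b0 : 0 < beta by lra.
have fnz : f != 0 by apply/eqP => fz; move: f1; rewrite fz horner0; lra.
set m := pmin f beta 1.
have m0 : 0 < m.
  have mge : 0 <= m by apply: pmin_ge0; lra.
  rewrite lt_neqAle mge andbT; apply/negP => /eqP m00.
  have PX : Pt' t ('X : {poly R}).
    split; first by rewrite size_polyX.
    by rewrite !hornerX.
  have := hmin _ PX; rewrite /ratio_obj -/m -m00 eqxx.
  have XB : beta <= pmin 'X beta 1.
    apply: pmin_ge; first lra.
    move=> x /andP[bx _]; rewrite hornerX ger0_norm //; lra.
  have -> : (pmin 'X beta 1 == 0) = false by apply/negbTE; rewrite gt_eqF //; lra.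
  by [].
have fpos : forall x, beta <= x <= 1 -> 0 < f.[x].
  move=> x /andP[bx x1]; rewrite ltNge; apply/negP => fx.
  have H : f.[x] <= 0 <= f.[1] by rewrite fx f1 ler01.
  have [y /andP[xy y1] /eqP ry] := @poly_ivt _ f x 1 x1 H.
  have : m <= `|f.[y]| by apply: pmin_lb; apply/andP; split; lra.
  rewrite ry normr0; lra.
have a0 : 0 <= alpha by lra.
have [x0 x0a [HM Mub]] := pmax_spec f a0.
set M := pmax f 0 alpha in HM Mub hmin *.
have M0 : 0 < M.
  have [z [/andP[z0 za] fz]] := poly_nz_itv fnz halpha.
  have h1 : 0 < `|f.[z]| by rewrite normr_gt0.
  have h2 : `|f.[z]| <= M by apply: Mub; apply/andP; split; lra.
  lra.
set P := f * f - (M ^+ 2)%:P.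
have Pnz : P != 0.
  apply/eqP => P0; have : P.[0] = 0 by rewrite P0 horner0.
  rewrite /P hornerD hornerN hornerM f0 hornerC mul0r add0r => /eqP.
  by rewrite oppr_eq0 expf_eq0 /= gt_eqF.
have rootP : forall x, root P x = (`|f.[x]| == M).
  move=> x; rewrite /root /P hornerD hornerN hornerM hornerC subr_eq0.
  by rewrite -(@eqrXn2 _ 2 _ _ isT (normr_ge0 _) (ltW M0)) real_normK ?num_real // expr2.
set L := [seq x <- roots P 0 beta | x <= alpha].
have memL : forall x, x \in L = [&& 0 < x, x <= alpha & `|f.[x]| == M].
  move=> x; rewrite mem_filter.
  case xa: (x <= alpha); rewrite ?andbF //=.
  have [x0'|x0'] := ltP 0 x.
    rewrite -root_is_roots // ?rootP // in_itv /= x0' /=; lra.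
  apply/negP => /roots_in; rewrite in_itv /=; lra.
have x0L : x0 \in L.
  rewrite memL -HM eqxx andbT; case/andP: x0a => x00 ->; rewrite andbT.
  rewrite lt_neqAle x00 andbT; apply/eqP => ex; move: HM; rewrite -ex f0 normr0; lra.
case EL: L x0L => [|x s] // _.
have sL : sorted <%R (x :: s) by rewrite -EL; exact: (sorted_filter (@lt_trans _ _) _ (sorted_roots _ _ _)).
have aL : all (fun e => `|f.[e]| == M) (x :: s).
  by apply/allP => e; rewrite -EL memL => /and3P[].
have bL : all (fun e => e < beta) (x :: s).
  apply/allP => e; rewrite -EL memL => /and3P[_ ea _]; lra.
have [c [g [cB cx hc sg [subg altg]]]] := alt_sep M0 sL aL bL.
have inL : forall e, e \in x :: s -> [&& 0 < e, e <= alpha & `|f.[e]| == M].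
  by move=> e; rewrite -EL memL.
case: (leqP t (size c).+1) => tc.
  have memg : forall i, (i < t)%N -> nth 0 (x :: g) i \in x :: s.
    move=> i it; have : nth 0 (x :: g) i \in x :: g.
      by apply: mem_nth => /=; rewrite sg; apply: leq_trans tc.
    rewrite inE => /orP[/eqP ->|/subg //]; exact: mem_head.
  have altn : forall i, (i.+1 < t)%N ->
      altrel (fun e => f.[e]) (nth 0 (x :: g) i) (nth 0 (x :: g) i.+1).
    move=> i it; have := (pathP 0 altg) i.
    by rewrite sg; apply; rewrite -ltnS; apply: leq_trans tc.
  exists (fun i => nth 0 (x :: g) i); split; [|split; [|split]].
  - move=> i /memg /inL /and3P[e0 ea _]; apply/andP; split => //; lra.
  - by move=> i /altn /andP[].
  - by move=> i /memg /inL /and3P[_ _ /eqP].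
  - by move=> i /altn /andP[_ /eqP].
(* contradiction: build an improving polynomial *)
exfalso.
set fx := f.[x].
have fx0 : fx != 0.
  have := aL; rewrite /= => /andP[/eqP Fx _]; rewrite -normr_gt0 /fx Fx //.
set d := fx * (-1) ^+ size c.
have d0 : d != 0 by rewrite mulf_neq0 // signr_eq0.
set w := (alpha + beta) / 2.
set q : {poly R} := fx *: \prod_(ci <- c) (ci%:P - 'X).
set r : {poly R} := if d < 0 then 1 else w%:P - 'X.
set h : {poly R} := 'X * q * r.
have hq : forall y, q.[y] = fx * \prod_(ci <- c) (ci - y).
  by move=> y; rewrite /q hornerZ horner_prod_lin.
have hh : forall y, h.[y] = y * q.[y] * r.[y].
  by move=> y; rewrite /h !hornerM hornerX.
have hr : forall y, r.[y] = if d < 0 then 1 else w - y.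
  by move=> y; rewrite /r; case: (d < 0); rewrite ?hornerC // hornerD hornerN hornerC hornerX.
have h0 : h.[0] = 0 by rewrite hh !mul0r.
have hE : forall e, e \in x :: s -> 0 < h.[e] * f.[e].
  move=> e eL; have /and3P[e0 ea _] := inL e eL.
  have re : 0 < r.[e] by rewrite hr; case: (d < 0) => //; rewrite subr_gt0 /w; lra.
  have := hc e eL; rewrite hh hq -/fx => H.
  have -> : e * (fx * \prod_(ci <- c) (ci - e)) * r.[e] * f.[e]
     = (e * r.[e]) * (fx * \prod_(ci <- c) (ci - e) * f.[e]) by ring.
  by rewrite mulr_gt0 // mulr_gt0.
have hB : forall y, beta <= y -> h.[y] < 0.
  move=> y by_; rewrite hh hq prod_neg.
  have pp : 0 < \prod_(ci <- c) (y - ci).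
    by apply: prod_pos'; apply/allP => ci /(allP cB) => ?; lra.
  have dr : d * r.[y] < 0.
    rewrite hr; have [dl|dl] := ltP d 0; first by rewrite mulr1.
    have dp : 0 < d by rewrite lt_neqAle eq_sym d0.
    by rewrite pmulr_rlt0 // subr_lt0 /w; lra.
  have -> : y * (fx * ((-1) ^+ size c * \prod_(ci <- c) (y - ci))) * r.[y]
     = (y * \prod_(ci <- c) (y - ci)) * (d * r.[y]) by rewrite /d; ring.
  by rewrite pmulr_rlt0 // mulr_gt0 //; lra.
have sh : (size h <= t.+1)%N.
  have sq : (size q <= (size c).+1)%N.
    exact: leq_trans (size_scale_leq _ _) (size_prod_lin c).
  have sr : (size r <= 2)%N.
    rewrite /r; case: (d < 0); first by rewrite size_poly1.
    by rewrite -opprB size_polyN size_XsubC.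
  have s1 := size_polyMleq ('X * q) r.
  have s2 := size_polyMleq 'X q; rewrite size_polyX in s2.
  exact: (arith_size s1 s2 sq sr tc).
set k : {poly R} := f * h.
pose th := fun y : R => `|f.[y]| - (k.[y] + `|k.[y]|) / 2.
have cth : continuous th.
  move=> y.
  have c1 : {for y, continuous (fun z : R => k.[z] + `|k.[z]|)}.
    have := @continuousD _ _ _ (fun z : R => k.[z]) (fun z => `|k.[z]|) y.
    by apply; [exact: continuous_horner | exact: cont_abs_horner].
  have c2 : {for y, continuous (fun z : R => (k.[z] + `|k.[z]|) / 2)}.
    have := @continuousM _ _ (fun z : R => k.[z] + `|k.[z]|) (fun=> 2^-1) y.
    by apply => //; exact: cst_continuous.
  have c3 := continuousN c2.
  have := @continuousD _ _ _ (fun z : R => `|f.[z]|) (fun z => - ((k.[z] + `|k.[z]|) / 2)) y.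
  by apply => //; exact: cont_abs_horner.
have [x1 x1a x1max] := EVT_max a0 (continuous_subspaceT cth).
have thM : forall y, 0 <= y <= alpha -> th y < M.
  move=> y /andP[y0 ya]; rewrite /th.
  have fyM : `|f.[y]| <= M by apply: Mub; rewrite y0 ya.
  have [kp|kn] := ltP 0 k.[y].
    rewrite (gtr0_norm kp); lra.
  rewrite (ler0_norm kn) subrr mul0r subr0 lt_neqAle fyM andbT.
  apply/negP => /eqP fyM'.
  have yL : y \in x :: s.
    rewrite -EL memL ya fyM' eqxx !andbT lt_neqAle y0 andbT.
    by apply/eqP => y00; move: fyM'; rewrite -y00 f0 normr0; lra.
  have := hE y yL; rewrite mulrC -hornerM -/k; lra.
have x1a' : 0 <= x1 <= alpha by rewrite in_itv /= in x1a.
set delta := M - th x1.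
have dpos : 0 < delta by rewrite /delta subr_gt0 thM.
have hK : forall y, 0 <= y <= alpha -> k.[y] <= 0 -> `|f.[y]| <= M - delta.
  move=> y ya kn; have := x1max y; rewrite in_itv /= => /(_ ya).
  by rewrite /delta /th (ler0_norm kn) subrr mul0r subr0; lra.
have [x2 _ [_ Hub]] := pmax_spec h a0.
set H := pmax h 0 alpha in Hub.
have H0 : 0 <= H by apply: le_trans (Hub 0 _); rewrite ?normr_ge0 // lexx a0.
set mu := Num.min delta M.
have mu0 : 0 < mu by rewrite lt_min dpos M0.
have mud : mu <= delta by rewrite ge_min lexx.
have muM : mu <= M by rewrite ge_min lexx orbT.
set eps := mu / (H + 1).
have eps0 : 0 < eps by rewrite divr_gt0 //; lra.
have epsH : eps * H < mu.
  by rewrite /eps mulrAC ltr_pdivrMr; [nra | lra].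
set G : {poly R} := f - eps *: h.
have hg : forall y, G.[y] = f.[y] - eps * h.[y].
  by move=> y; rewrite /G hornerD hornerN hornerZ.
have hgM : forall y, 0 <= y <= alpha -> `|G.[y]| < M.
  move=> y ya; rewrite hg.
  have hy : `|h.[y]| <= H by apply: Hub.
  have ehy : `|eps * h.[y]| <= eps * H by rewrite normrM gtr0_norm // ler_wpM2l // ltW.
  have [kp|kn] := ltP 0 k.[y].
    apply: same_sign_lt; first by rewrite mulrCA mulr_gt0 // -hornerM.
      by apply: Mub.
    lra.
  have := hK y ya kn; have := ler_normB f.[y] (eps * h.[y]); lra.
set g1 := G.[1].
have g1p : 1 <= g1.
  rewrite /g1 hg f1; have := hB 1 (ltW hbeta); have := eps0; nra.
have g1n : g1 != 0 by apply/eqP => e; move: g1p; rewrite e; lra.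
set Gp : {poly R} := g1^-1 *: G.
have hGp : forall y, Gp.[y] = g1^-1 * G.[y] by move=> y; rewrite /Gp hornerZ.
have PGp : Pt' t Gp.
  split; last split.
  - apply: leq_trans (size_scale_leq _ _) _; rewrite /G.
    apply: leq_trans (size_polyD _ _) _; rewrite size_polyN geq_max sf /=.
    exact: leq_trans (size_scale_leq _ _) sh.
  - by rewrite hGp hg f0 h0 mulr0 subr0 mulr0.
  - by rewrite hGp -/g1 mulVf.
have ig0 : 0 < g1^-1 by rewrite invr_gt0; lra.
have [x3 x3a [HP _]] := pmax_spec Gp a0.
have Pbound : pmax Gp 0 alpha < g1^-1 * M.
  by rewrite HP hGp normrM (gtr0_norm ig0) ltr_pM2l // hgM.
have Qbound : g1^-1 * m <= pmin Gp beta 1.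
  apply: pmin_ge; first lra.
  move=> y yb; have /andP[by_ y1] := yb; rewrite hGp normrM (gtr0_norm ig0) ler_pM2l //.
  have fy := fpos y yb.
  have := pmin_lb f yb; rewrite -/m (gtr0_norm fy) => my.
  have := hB y by_; rewrite hg => hy.
  apply: le_trans (ler_norm _); have := eps0; nra.
have := hmin _ PGp; rewrite /ratio_obj -/m (gt_eqF m0).
rewrite (gt_eqF (lt_le_trans (mulr_gt0 ig0 m0) Qbound)) lee_fin.
set P0 := pmax Gp 0 alpha in Pbound *.
set Q0 := pmin Gp beta 1 in Qbound *.
have Q0p : 0 < Q0 by apply: lt_le_trans Qbound; rewrite mulr_gt0.
move=> HH.
have P00 : 0 <= P0 by rewrite /P0 HP normr_ge0.
have HH' : M * Q0 <= P0 * m.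
  have e1 : M * Q0 = (M / m) * (m * Q0) by field; rewrite gt_eqF.
  have e2 : P0 * m = (P0 / Q0) * (m * Q0) by field; rewrite gt_eqF.
  by rewrite e1 e2 ler_pM2r // mulr_gt0.
have : M * (g1^-1 * m) <= M * Q0 by rewrite ler_pM2l.
have : P0 * m < g1^-1 * M * m by rewrite ltr_pM2r.
nra.
Qed.
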